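(* For any finite simple graphs $G$ and $H$ without isolated vertices, $$\gamma_{tR}(G\times H)\le 2\gamma_{t}(G)\gamma_{t}(H).$$
   Context: A set $D\subseteq V(G)$ is total dominating if every vertex of $G$ has a neighbor in $D$; $\gamma_t(G)$ is the minimum size of a total dominating set. A total Roman dominating function on $G$ is a map $f:V(G)\to\{0,1,2\}$ such that every vertex with label 0 has a neighbor with label 2 and the subgraph induced by vertices with positive labels has no isolated vertices; $\gamma_{tR}(G)$ is the minimum of $\sum_v f(v)$ over such $f$. The direct product $G\times H$ has vertex set $V(G)\times V(H)$, with $(g,h)(g',h')$ an edge iff $gg'\in E(G)$ and $hh'\in E(H)$. *)

(* Defs.v *)
From mathcomp Require Import all_boot.
Set Implicit Arguments. Unset Strict Implicit. Unset Printing Implicit Defensive.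

Definition simple_graph (T : finType) (e : rel T) : Prop :=
  symmetric e /\ irreflexive e.

Definition no_isolated (T : finType) (e : rel T) : Prop :=
  forall v : T, exists u : T, e v u.

Definition total_dominating (T : finType) (e : rel T) (D : {set T}) : bool :=
  [forall v : T, exists u in D, e v u].

(* total domination number (minimum size of a total dominating set);
   default #|T| is irrelevant when there are no isolated vertices *)
Definition gamma_t (T : finType) (e : rel T) : nat :=
  \big[minn/#|T|]_(D : {set T} | total_dominating e D) #|D|.

Definition total_roman (T : finType) (e : rel T) (f : {ffun T -> 'I_3}) : bool :=
  [forall v : T, (nat_of_ord (f v) == 0) ==> [exists u, e v u && (nat_of_ord (f u) == 2)]]
  && [forall v : T, (0 < f v) ==> [exists u, e v u && (0 < f u)]].

Definition weight (T : finType) (f : {ffun T -> 'I_3}) : nat :=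
  \sum_(v : T) nat_of_ord (f v).

Definition gamma_tR (T : finType) (e : rel T) : nat :=
  \big[minn/(2 * #|T|)]_(f : {ffun T -> 'I_3} | total_roman e f) weight f.

Definition direct_prod (T1 T2 : finType) (e1 : rel T1) (e2 : rel T2) : rel (T1 * T2) :=
  fun x y => e1 x.1 y.1 && e2 x.2 y.2.

(* Main.v *)
Require Import Defs.
From mathcomp Require Import all_boot.
From mathcomp Require Import zify.

Lemma bigmin_le (I : finType) (P : pred I) (F : I -> nat) x j :
  P j -> \big[minn/x]_(i | P i) F i <= F j.
Proof.
move=> Pj; have : j \in index_enum I by rewrite mem_index_enum.
elim: (index_enum I) => // a r IH; rewrite inE big_cons => /orP [/eqP <-|jr].
  by rewrite Pj geq_minl.
case: (P a); last exact: IH.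
exact: leq_trans (geq_minr _ _) (IH jr).
Qed.

Lemma gamma_t_attained (T : finType) (e : rel T) :
  no_isolated e -> exists D, total_dominating e D && (#|D| == gamma_t e).
Proof.
move=> ni; rewrite /gamma_t.
apply: (big_ind (fun n => exists D, total_dominating e D && (#|D| == n))).
- exists setT; rewrite cardsT eqxx andbT; apply/forallP => v.
  by case: (ni v) => u hu; apply/existsP; exists u; rewrite in_setT hu.
- move=> a b [D HD] [D' HD']; case: (leqP a b) => hab.
    by exists D.
  by exists D'.
- by move=> D HD; exists D; rewrite HD eqxx.
Qed.

Theorem corollary2p4 (T1 T2 : finType) (e1 : rel T1) (e2 : rel T2) :
  simple_graph e1 -> simple_graph e2 ->
  no_isolated e1 -> no_isolated e2 ->
  gamma_tR (direct_prod e1 e2) <= 2 * gamma_t e1 * gamma_t e2.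
Proof.
move=> _ _ n1 n2.
case: (@gamma_t_attained _ _ n1) => D1 /andP [t1 /eqP <-].
case: (@gamma_t_attained _ _ n2) => D2 /andP [t2 /eqP <-].
pose two : 'I_3 := @Ordinal 3 2 isT.
pose zero : 'I_3 := @Ordinal 3 0 isT.
pose f := [ffun x : T1 * T2 => if (x.1 \in D1) && (x.2 \in D2) then two else zero].
have fv : forall x, nat_of_ord (f x) = if (x.1 \in D1) && (x.2 \in D2) then 2 else 0.
  by move=> x; rewrite ffunE; case: ifP.
have Hf : total_roman (direct_prod e1 e2) f.
  apply/andP; split; apply/forallP => [[g h]]; apply/implyP => _.
  - case/forallP/(_ g)/existsP: t1 => a /andP [aD ga].
    case/forallP/(_ h)/existsP: t2 => b /andP [bD hb].
    apply/existsP; exists (a, b); rewrite /direct_prod /= ga hb fv /= aD bD //.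
  - case/forallP/(_ g)/existsP: t1 => a /andP [aD ga].
    case/forallP/(_ h)/existsP: t2 => b /andP [bD hb].
    apply/existsP; exists (a, b); rewrite /direct_prod /= ga hb fv /= aD bD //.
apply: leq_trans (@bigmin_le _ _ (fun g => weight g) _ _ Hf) _.
rewrite /weight.
under eq_bigr => x _ do rewrite fv.
rewrite -big_mkcond /= -mulnA.
have -> : \sum_(x : T1 * T2 | (x.1 \in D1) && (x.2 \in D2)) 2 = 2 * #|setX D1 D2|.
  by rewrite sum_nat_const mulnC; congr (_ * _); apply: eq_card => -[x y]; rewrite in_setX.
by rewrite cardsX.
Qed.
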